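(* Let $\eta>1$ and $\epsilon>0$. If a distribution $\mu$ over $\{-1,+1\}^n$ is $(\eta,\epsilon)$-completely spectrally independent, then for every $0<\alpha\le1/(2\eta)$ and every $x\in\left(0,(1+\epsilon)^{1/\alpha}\right]^n$ we have $F_{\mu,\alpha}(x)\le1$, where $$F_{\mu,\alpha}(z_1,\dots,z_n)=\frac{g_\mu(z_1^\alpha,\dots,z_n^\alpha)^{1/\alpha}}{\prod_{i=1}^n(\mu_i(+1)z_i+\mu_i(-1))}.$$
   Context: $g_\mu(z)=\sum_{\sigma\in\{-1,+1\}^n}\mu(\sigma)\prod_{i:\sigma_i=+1}z_i$; $\mu_i$ is the marginal at coordinate $i$. $(\boldsymbol\lambda*\mu)(\sigma)\propto\mu(\sigma)\prod_{i:\sigma_i=+1}\lambda_i$. $\mu$ is $(\eta,\epsilon)$-completely spectrally independent if $(\boldsymbol\lambda*\mu)$ is $\eta$-spectrally independent for every $\boldsymbol\lambda\in(0,1+\epsilon]^n$. A distribution $\nu$ is $\eta$-spectrally independent if for every $\Lambda\subseteq[n]$ and every $\sigma$ in the support of the marginal $\nu_\Lambda$, the spectral radius of the matrix $\Psi_{\nu^\sigma}(i,j)=\max_{x,y}d_{\mathrm{TV}}(\nu_j^{\sigma\wedge i\gets x},\nu_j^{\sigma\wedge i\gets y})$ (max over $x,y$ in the support of $\nu^\sigma_i$) is at most $\eta$; here $\nu^\sigma$ is $\nu$ conditioned on $\sigma$ and $\nu^{\sigma\wedge i\gets x}$ is further conditioned on coordinate $i$ equal to $x$. *)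

(* Defs.v *)
From HB Require Import structures.
From mathcomp Require Import all_boot all_order all_algebra.
From mathcomp Require Import complex.
From mathcomp Require Import all_classical all_reals all_analysis.
Set Implicit Arguments. Unset Strict Implicit. Unset Printing Implicit Defensive.
Import Order.TTheory GRing.Theory Num.Theory.
Local Open Scope classical_set_scope.
Local Open Scope ring_scope.

(* The hypercube {-1,+1}^n; a configuration s assigns the boolean
   (true <-> +1, false <-> -1) s i to coordinate i. *)
Definition cube (n : nat) := {ffun 'I_n -> bool}.

Section Defs.
Variables (R : realType) (n : nat).

Definition is_distribution (mu : cube n -> R) : Prop :=
  (forall s, 0 <= mu s) /\ \sum_(s : cube n) mu s = 1.

Definition gen_poly (mu : cube n -> R) (z : 'I_n -> R) : R :=
  \sum_(s : cube n) mu s * \prod_(i < n | s i) z i.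

Definition prob (mu : cube n -> R) (P : pred (cube n)) : R :=
  \sum_(s : cube n | P s) mu s.

Definition marginal (mu : cube n -> R) (i : 'I_n) (b : bool) : R :=
  prob mu (fun s => s i == b).

Definition tilt (lam : 'I_n -> R) (mu : cube n -> R) : cube n -> R :=
  fun s => mu s * \prod_(i < n | s i) lam i / gen_poly mu lam.

Definition agree (L : {set 'I_n}) (t : cube n) : pred (cube n) :=
  fun s => [forall i in L, s i == t i].

Definition cond_marginal (mu : cube n -> R) (P : pred (cube n)) (j : 'I_n)
  (b : bool) : R :=
  prob mu (fun s => P s && (s j == b)) / prob mu P.

Definition dTV (p q : bool -> R) : R := 2^-1 * \sum_(b : bool) `|p b - q b|.

Definition pin (L : {set 'I_n}) (t : cube n) (i : 'I_n) (x : bool) : pred (cube n) :=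
  fun s => agree L t s && (s i == x).

Definition influence (nu : cube n -> R) (L : {set 'I_n}) (t : cube n) : 'M[R]_n :=
  \matrix_(i < n, j < n)
    \big[Num.max/0]_(x : bool | 0 < prob nu (pin L t i x))
      \big[Num.max/0]_(y : bool | 0 < prob nu (pin L t i y))
        dTV (cond_marginal nu (pin L t i x) j) (cond_marginal nu (pin L t i y) j).

Definition spectral_radius (A : 'M[R]_n) : R :=
  sup [set ComplexField.Normc.normc l | l in [set l : R[i] | eigenvalue (map_mx (fun r => r%:C%C) A) l]].

Definition spectrally_independent (nu : cube n -> R) (eta : R) : Prop :=
  forall (L : {set 'I_n}) (t : cube n), 0 < prob nu (agree L t) ->
    spectral_radius (influence nu L t) <= eta.

Definition completely_spectrally_independent (mu : cube n -> R) (eta eps : R) : Prop :=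
  forall lam : 'I_n -> R, (forall i, 0 < lam i <= 1 + eps) ->
    spectrally_independent (tilt lam mu) eta.

Definition F_fun (mu : cube n -> R) (alpha : R) (z : 'I_n -> R) : R :=
  (gen_poly mu (fun i => z i `^ alpha)) `^ (alpha^-1)
  / \prod_(i < n) (marginal mu i true * z i + marginal mu i false).

End Defs.

(* Main.v *)
Require Import Defs.
From HB Require Import structures.
From mathcomp Require Import all_boot all_order all_algebra.
From mathcomp Require Import complex.
From mathcomp Require Import all_classical all_reals all_analysis.
From mathcomp Require Import ring lra.
Set Implicit Arguments. Unset Strict Implicit. Unset Printing Implicit Defensive.
Import Order.TTheory GRing.Theory Num.Theory numFieldNormedType.Exports.
Local Open Scope ring_scope.
Local Open Scope classical_set_scope.

Section Chain.
Variable R : realType.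

Lemma is_derive_comp1 (f g : R -> R) (x df dg : R) :
  is_derive x 1 f df -> is_derive (f x) 1 g dg ->
  is_derive x 1 (g \o f) (dg * df).
Proof.
move=> [Hf Vf] [Hg Vg].
have dfx : derivable (g \o f) x 1.
  apply/derivable1_diffP; apply: differentiable_comp; exact/derivable1_diffP.
apply: DeriveDef => //.
by rewrite -derive1E derive1_comp // !derive1E Vf Vg.
Qed.

Lemma is_derive_lam_sum (S : finType) (f : S -> R -> R) (df : S -> R) (x : R) :
  (forall s, is_derive x 1 (f s) (df s)) ->
  is_derive x 1 (fun t => \sum_s f s t) (\sum_s df s).
Proof.
move=> H.
have -> : (fun t => \sum_s f s t) = \sum_s f s.
  by apply/funext => t; rewrite fct_sumE.
by elim/big_ind2 : _ => // [|] *; [exact: is_derive_cst|exact: is_deriveD].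
Qed.

Lemma is_derive_affine (b c x : R) : is_derive x 1 (fun t => b + t * c) c.
Proof.
have -> : (fun t => b + t * c) = cst b + ( *%R^~ c) by [].
apply: is_derive_eq.
by rewrite scaler0 !add0r -[RHS]mulr1.
Qed.

Lemma is_derive_ln_comp (f : R -> R) (x df : R) : 0 < f x ->
  is_derive x 1 f df -> is_derive x 1 (fun t => ln (f t)) (df / f x).
Proof.
move=> fx Hf.
have := is_derive_comp1 Hf (is_derive1_ln fx).
by rewrite mulrC.
Qed.

Lemma is_derive_expR_comp (f : R -> R) (x df : R) :
  is_derive x 1 f df -> is_derive x 1 (fun t => expR (f t)) (expR (f x) * df).
Proof.
move=> Hf.
exact: (is_derive_comp1 Hf (is_derive_expR (f x))).
Qed.

Lemma is_derive_mul (f g : R -> R) (x df dg : R) :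
  is_derive x 1 f df -> is_derive x 1 g dg ->
  is_derive x 1 (fun t => f t * g t) (df * g x + f x * dg).
Proof.
move=> Hf Hg.
have := is_deriveM Hf Hg.
have -> : (f * g) = (fun t => f t * g t) by [].
move=> H; apply: is_derive_eq.
by rewrite addrC [_ *: df]mulrC.
Qed.

Lemma is_derive_inv (f : R -> R) (x df : R) : f x != 0 ->
  is_derive x 1 f df -> is_derive x 1 (fun t => (f t)^-1) (- df / (f x) ^+ 2).
Proof.
move=> fx0 Hf.
have := is_deriveV fx0 Hf.
move=> H; apply: is_derive_eq.
by rewrite scaleNr mulNr [_ *: _]mulrC.
Qed.

Lemma is_derive_scal (f : R -> R) (k x df : R) :
  is_derive x 1 f df -> is_derive x 1 (fun t => k * f t) (k * df).
Proof.
move=> Hf; have := is_deriveZ k Hf.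
move=> H; apply: is_derive_eq.
by [].
Qed.
End Chain.

Section Calc.
Variables (R : realType) (S : finType) (n : nat) (m : S -> R) (a : S -> 'I_n -> R) (al : R).

Definition cw s i (t : R) := 1 + t * a s i.
Definition cL s (t : R) := \sum_i ln (cw s i t).
Definition cE s t := expR (al * cL s t).
Definition cX s t := \sum_i a s i / cw s i t.
Definition cY s t := \sum_i (a s i / cw s i t) ^+ 2.
Definition cPhi t := \sum_s m s * cE s t.
Definition cN t := \sum_s m s * (cE s t * cX s t).
Definition cN' t := \sum_s m s * (cE s t * (al * cX s t ^+ 2 - cY s t)).

Hypothesis m_ge0 : forall s, 0 <= m s.
Hypothesis m_pos : 0 < \sum_s m s.
Hypothesis al_gt0 : 0 < al.
Hypothesis wpos : forall s i t, 0 <= t <= 1 -> 0 < cw s i t.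

Section At.
Variable t : R.
Hypothesis t01 : 0 <= t <= 1.

Lemma dw s i : is_derive t 1 (cw s i) (a s i).
Proof. exact: is_derive_affine. Qed.

Lemma dL s : is_derive t 1 (cL s) (cX s t).
Proof.
apply: is_derive_lam_sum => i.
exact: (is_derive_ln_comp (wpos s i t01) (dw s i)).
Qed.

Lemma dE s : is_derive t 1 (cE s) (cE s t * (al * cX s t)).
Proof.
apply: is_derive_expR_comp.
exact: is_derive_scal (dL s).
Qed.

Lemma dX s : is_derive t 1 (cX s) (- cY s t).
Proof.
rewrite /cY -sumrN.
apply: is_derive_lam_sum => i.
have H := is_derive_scal (a s i) (is_derive_inv (lt0r_neq0 (wpos s i t01)) (dw s i)).
apply: is_derive_eq.
by rewrite expr_div_n mulNr mulrN mulrA -expr2.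
Qed.

Lemma dEX s : is_derive t 1 (fun t => cE s t * cX s t)
  (cE s t * (al * cX s t ^+ 2 - cY s t)).
Proof.
have H := is_derive_mul (dE s) (dX s).
apply: is_derive_eq.
by rewrite mulrBr mulrN expr2 !mulrA [_ * al]mulrC.
Qed.

Lemma dPhi : is_derive t 1 cPhi (al * cN t).
Proof.
rewrite /cN mulr_sumr.
apply: is_derive_lam_sum => s.
have H := is_derive_scal (m s) (dE s).
apply: is_derive_eq.
by ring.
Qed.

Lemma dN : is_derive t 1 cN (cN' t).
Proof.
apply: is_derive_lam_sum => s.
exact: is_derive_scal (dEX s).
Qed.

End At.

Lemma cE_gt0 s t : 0 < cE s t.
Proof. exact: expR_gt0. Qed.

Lemma cPhi_gt0 t : 0 < cPhi t.
Proof.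
rewrite lt_neqAle eq_sym; apply/andP; split; last first.
  by apply: sumr_ge0 => s _; rewrite mulr_ge0 // ltW // cE_gt0.
apply/negP => /eqP H.
have H0 := psumr_eq0P (fun s _ => mulr_ge0 (m_ge0 s) (ltW (cE_gt0 s t))) H.
have : \sum_s m s = 0.
  apply: big1 => s _; have := H0 s isT.
  by move/eqP; rewrite mulf_eq0 (gt_eqF (cE_gt0 s t)) orbF => /eqP.
by move=> E; move: m_pos; rewrite E ltxx.
Qed.

Lemma cN'E t : cN' t = al * \sum_s m s * (cE s t * cX s t ^+ 2)
   - \sum_s m s * (cE s t * cY s t).
Proof.
rewrite /cN' mulr_sumr -sumrB; apply: eq_bigr => s _; ring.
Qed.

Lemma calc_main :
  (\sum_s m s * \sum_i a s i <= 0) ->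
  (forall t, 0 <= t <= 1 -> al * ((\sum_s m s * (cE s t * cX s t ^+ 2)) * cPhi t
      - cN t ^+ 2) <= (\sum_s m s * (cE s t * cY s t)) * cPhi t) ->
  cPhi 1 <= cPhi 0.
Proof.
move=> N0 var.
pose Q t := cN t * (cPhi t)^-1.
have dQ (t : R) : 0 <= t <= 1 -> is_derive t 1 Q
    (cN' t * (cPhi t)^-1 + cN t * (- (al * cN t) / cPhi t ^+ 2)).
  move=> t01; apply: is_derive_mul; first exact: dN.
  exact: is_derive_inv (lt0r_neq0 (cPhi_gt0 t)) (dPhi t01).
have Q'le0 (t : R) : 0 <= t <= 1 ->
    cN' t * (cPhi t)^-1 + cN t * (- (al * cN t) / cPhi t ^+ 2) <= 0.
  move=> t01; have Pp := cPhi_gt0 t.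
  have -> : cN' t * (cPhi t)^-1 + cN t * (- (al * cN t) / cPhi t ^+ 2)
     = (cN' t * cPhi t - al * cN t ^+ 2) / cPhi t ^+ 2.
    by field; rewrite gt_eqF.
  rewrite pmulr_lle0 ?invr_gt0 ?exprn_gt0 // cN'E subr_le0.
  move: (var t t01); lra.
have t01_in x : x \in `]0, 1[%R -> 0 <= x <= 1.
  by rewrite in_itv /= => /andP[/ltW -> /ltW ->].
have Qle (t : R) : 0 <= t <= 1 -> Q t <= Q 0.
  move=> /andP[t0 t1].
  apply: (@ler0_derive1_nincr _ Q 0 1) => //.
  - by move=> x /t01_in x01; have [] := dQ x x01.
  - move=> x /t01_in x01; rewrite derive1E.
    by have [_ ->] := dQ x x01; exact: Q'le0.
  - apply: derivable_within_continuous => x.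
    by rewrite in_itv /= => x01; have [] := dQ x x01.
have Q0 : Q 0 <= 0.
  rewrite /Q pmulr_lle0 ?invr_gt0 ?cPhi_gt0 //.
  rewrite /cN; apply: le_trans N0 => /=; apply: ler_sum => s _.
  rewrite /cE /cX /cL /cw.
  rewrite big1 ?mulr0 ?expR0 ?mul1r; last by move=> i _; rewrite mul0r addr0 ln1.
  by rewrite ler_wpM2l //; rewrite le_eqVlt; apply/orP; left; apply/eqP/eq_bigr => i _; rewrite mul0r addr0 divr1.
have Nle (t : R) : 0 <= t <= 1 -> cN t <= 0.
  move=> t01; have := le_trans (Qle t t01) Q0.
  by rewrite /Q pmulr_lle0 ?invr_gt0 ?cPhi_gt0.
apply: (@ler0_derive1_nincr _ cPhi 0 1) => //.
- by move=> x /t01_in x01; have [] := dPhi x01.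
- move=> x /t01_in x01; rewrite derive1E.
  have [_ ->] := dPhi x01.
  by rewrite pmulr_rle0 // Nle.
- apply: derivable_within_continuous => x.
  by rewrite in_itv /= => x01; have [] := dPhi x01.
Qed.
End Calc.

Section LA.
Variable R : realType.

Lemma minratio n (B : 'M[R]_n) (v g : 'I_n -> R) :
  (forall i j, i != j -> B i j <= 0) -> (forall i, 0 < v i) ->
  (forall i, 0 < \sum_j B i j * v j) -> (forall i, 0 <= \sum_j B i j * g j) ->
  forall i, 0 <= g i.
Proof.
move=> Boff vpos Bv Bg i0.
have [k _ Hk] := @arg_minP _ _ 'I_n i0 xpredT (fun k => g k / v k) isT.
set r := g k / v k in Hk.
suff r0 : 0 <= r.
  have := Hk i0 isT => /(le_trans r0).
  by rewrite pmulr_lge0 // invr_gt0.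
rewrite leNgt; apply/negP => rlt0.
have : \sum_j B k j * g j <= r * \sum_j B k j * v j.
  rewrite mulr_sumr; apply: ler_sum => j _.
  have [->|jk] := eqVneq j k.
    by rewrite /r mulrCA divfK // gt_eqF.
  have Hj : r * v j <= g j.
    by have := Hk j isT; rewrite ler_pdivlMr.
  rewrite mulrCA; apply: ler_wnM2l; last exact: Hj.
  by apply: Boff; rewrite eq_sym.
have := Bg k; have := Bv k.
set X := \sum_j B k j * g j; set Y := \sum_j B k j * v j.
move=> h2 h3 h4.
have : r * Y < 0 by rewrite nmulr_rlt0.
lra.
Qed.


Lemma rowE n (A : 'M[R]_n) (t : R) (v : 'I_n -> R) i :
  \sum_j (t%:M - A) i j * v j = t * v i - \sum_j A i j * v j.
Proof.
under eq_bigr do rewrite !mxE mulrBl.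
rewrite sumrB (bigD1 i) //= eqxx mulr1n big1 ?addr0 // => j /negbTE.
by rewrite eq_sym => ->; rewrite mulr0n mul0r.
Qed.

Definition wv n (A : 'M[R]_n) (t : R) i :=
  (\sum_j \adj (t%:M - A) i j) / \det (t%:M - A).

Lemma wvE n (A : 'M[R]_n) (t : R) : \det (t%:M - A) != 0 ->
  forall i, \sum_j (t%:M - A) i j * wv A t j = 1.
Proof.
move=> d0 i.
rewrite /wv.
under eq_bigr do rewrite mulrA mulr_sumr.
rewrite -mulr_suml exchange_big /=.
have := mul_mx_adj (t%:M - A) => /matrixP H.
transitivity ((\sum_k ((t%:M - A) *m \adj (t%:M - A)) i k) / \det (t%:M - A)).
  by congr (_ * _); apply: eq_bigr => k _; rewrite mxE.
rewrite (eq_bigr (fun k => (\det (t%:M - A))%:M i k)); last by move=> k _; rewrite H.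
rewrite (bigD1 i) //= mxE eqxx mulr1n big1 ?addr0 ?divff // => k /negbTE.
by rewrite mxE eq_sym => ->.
Qed.

Lemma eval_cpmx n (A : 'M[R]_n) (t : R) :
  map_mx (horner_eval t) (char_poly_mx A) = t%:M - A.
Proof.
apply/matrixP => i j; rewrite !mxE /= horner_evalE.
by rewrite hornerD hornerN hornerMn hornerX hornerC.
Qed.

Lemma char_poly_eval n (A : 'M[R]_n) (t : R) :
  (char_poly A).[t] = \det (t%:M - A).
Proof.
by rewrite -eval_cpmx det_map_mx.
Qed.

Lemma wv_poly n (A : 'M[R]_n) (t : R) i :
  wv A t i = (\sum_j \adj (char_poly_mx A) i j).[t] / (char_poly A).[t].
Proof.
rewrite char_poly_eval /wv horner_sum; congr (_ / _); apply: eq_bigr => j _.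
by rewrite -eval_cpmx -map_mx_adj mxE.
Qed.

Definition wvi n (A : 'M[R]_n) i (s : R) := wv A s i.

Lemma wv_cont n (A : 'M[R]_n) (t : R) i : \det (t%:M - A) != 0 ->
  {for t, continuous (wvi A i)}.
Proof.
move=> d0.
have -> : wvi A i = (fun s : R => (\sum_j \adj (char_poly_mx A) i j).[s])
   \* (fun s : R => ((char_poly A).[s])^-1).
  by apply/funext => s; rewrite /wvi wv_poly.
apply: continuousM; first exact: continuous_horner.
apply: continuousV; first by rewrite char_poly_eval.
exact: continuous_horner.
Qed.

Lemma cont_neg (f : R -> R) (x : R) : {for x, continuous f} -> f x < 0 ->
  exists2 d, 0 < d & forall y, `|y - x| < d -> f y < 0.
Proof.
move=> cf fx.
have := cvgr_lt (f x) cf 0 fx.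
move=> H; have [d d0 Hd] := (nbhs_ballP _ _).1 (H (nbhs_filter x)).
exists d => // y yd; apply: Hd.
by rewrite /ball /= distrC.
Qed.


Lemma PF_lite n (A : 'M[R]_n) (c : R) : (forall i j, 0 <= A i j) -> 0 < c ->
  (forall t, c <= t -> \det (t%:M - A) != 0) ->
  exists v : 'I_n -> R, (forall i, 0 < v i) /\ (forall i, \sum_j A i j * v j <= c * v i).
Proof.
move=> A0 c0 dne.
pose G (t : R) := exists v : 'I_n -> R, (forall i, 0 < v i) /\
   (forall i, 0 < t * v i - \sum_j A i j * v j).
have K t : c <= t -> G t -> forall i, 0 <= wv A t i.
  move=> ct [v [vp Hv]]; apply: (@minratio _ (t%:M - A) v).
  - move=> i j ij; rewrite !mxE (negbTE ij) mulr0n sub0r oppr_le0; exact: A0.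
  - exact: vp.
  - by move=> i; rewrite rowE.
  - by move=> i; rewrite wvE ?dne.
have Kstep t : c <= t -> (forall i, 0 <= wv A t i) ->
   (forall i, 0 < wv A t i) /\ exists2 d, 0 < d & forall t', t - d < t' -> G t'.
  move=> ct wge0.
  have t0 : 0 < t by apply: lt_le_trans ct.
  have Ew i : t * wv A t i - \sum_j A i j * wv A t j = 1 by rewrite -rowE wvE ?dne.
  have wpos i : 0 < wv A t i.
    have h1 : 1 <= t * wv A t i.
      have := Ew i; have : 0 <= \sum_j A i j * wv A t j.
        by apply: sumr_ge0 => j _; apply: mulr_ge0.
      lra.
    rewrite ltNge; apply/negP => wle.
    have : t * wv A t i <= 0 by rewrite pmulr_rle0.
    lra.
  split => //.
  pose S := \sum_i wv A t i.
  have S0 : 0 <= S by apply: sumr_ge0 => i _; exact: wge0.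
  have S1 : 0 < 1 + S by lra.
  exists (1 + S)^-1; first by rewrite invr_gt0.
  move=> t' tt'; exists (wv A t); split => // i.
  have wS : wv A t i <= S.
    rewrite /S (bigD1 i) //= lerDl; apply: sumr_ge0 => j _; exact: wge0.
  set d := (1 + S)^-1 in tt'.
  have dS : d * (1 + S) = 1 by rewrite mulVf // gt_eqF.
  have h1 : 0 < (t' - t + d) * wv A t i by apply: mulr_gt0 => //; lra.
  have h2 : d * wv A t i <= d * S by rewrite ler_wpM2l // invr_ge0 ltW.
  have := Ew i.
  nra.
pose T0 := c + 1 + \sum_i \sum_j A i j.
have rowle i : \sum_j A i j <= \sum_i \sum_j A i j.
  rewrite [leRHS](bigD1 i) //= lerDl; apply: sumr_ge0 => k _; apply: sumr_ge0 => j _; exact: A0.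
have Atot : 0 <= \sum_i \sum_j A i j.
  by apply: sumr_ge0 => k _; apply: sumr_ge0 => j _; exact: A0.
have GT0 : G T0.
  exists (fun=> 1); split => // i; rewrite mulr1.
  under eq_bigr do rewrite mulr1.
  have := rowle i; rewrite /T0; lra.
pose Sset := [set t | c <= t /\ G t].
have ST0 : Sset T0 by split => //; rewrite /T0; lra.
have lb : lbound Sset c by move=> t [].
have hlb : has_lbound Sset by exists c.
have hinf : has_inf Sset by split => //; exists T0.
pose ts := inf Sset.
have cts : c <= ts by apply: lb_le_inf => //; exists T0.
have tsle t : Sset t -> ts <= t by move=> St; exact: ge_inf.
have wts i : 0 <= wv A ts i.
  rewrite leNgt; apply/negP => neg.
  have [d d0 Hd] := @cont_neg (wvi A i) ts (wv_cont (dne ts cts)) neg.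
  have [t St tlt] := inf_adherent d0 hinf.
  have := tsle t St => tst.
  have : wvi A i t < 0 by apply: Hd; rewrite ger0_norm; lra.
  rewrite /wvi; have := K t St.1 St.2 i; lra.
have [wp [d d0 Hd]] := Kstep ts cts wts.
have tsc : ts = c.
  apply/eqP; rewrite eq_le cts andbT leNgt; apply/negP => cts'.
  pose t' := Num.max c (ts - d / 2).
  have St' : Sset t'.
    split; first by rewrite le_max lexx.
    apply: Hd; rewrite lt_max; apply/orP; right; lra.
  by have := tsle t' St'; rewrite /t' le_max => /orP [] h; lra.
have [v [vp Hv]] : G c by apply: Hd; rewrite -tsc; lra.
exists v; split => // i; have := Hv i; lra.
Qed.

End LA.

Section SP.
Variable R : realType.

Lemma eig_bound n (A : 'M[R]_n) (l : R[i]) :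
  eigenvalue (map_mx (fun r => r%:C%C) A) l ->
  ComplexField.Normc.normc l <= spectral_radius A.
Proof.
move=> el.
pose M := map_mx (fun r : R => r%:C%C) A.
have [r Hr] := closed_field_poly_normal (char_poly M).
have mon : lead_coef (char_poly M) = 1 by have := char_poly_monic M; rewrite monicE => /eqP.
rewrite mon scale1r in Hr.
have inr z : eigenvalue M z -> z \in r.
  by rewrite eigenvalue_root_char Hr root_prod_XsubC.
have nge0 (z : R[i]) : 0 <= ComplexField.Normc.normc z.
  by case: z => a b; rewrite /ComplexField.Normc.normc sqrtr_ge0.
apply: sup_upper_bound; last by exists l.
split; first by exists (ComplexField.Normc.normc l); exists l.
exists (\sum_(z <- r) ComplexField.Normc.normc z) => _ [z /inr zr <-].
rewrite (big_rem z) //= lerDl; apply: sumr_ge0 => ? _; exact: nge0.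
Qed.

Lemma det_ne0 n (A : 'M[R]_n) (eta c : R) : spectral_radius A <= eta -> eta < c ->
  forall t, c <= t -> \det (t%:M - A) != 0.
Proof.
move=> hsr hc t ct; apply/negP => /eqP d0.
have rt : root (char_poly A) t by rewrite /root char_poly_eval d0.
have eA : eigenvalue A t by rewrite eigenvalue_root_char.
have eM : eigenvalue (map_mx (fun r : R => r%:C%C) A) (t%:C)%C.
  by have := eigenvalue_map (real_complex R) A t; rewrite eA => H; exact: H.
have := le_trans (eig_bound eM) hsr.
have -> : ComplexField.Normc.normc (t%:C)%C = `|t|.
  by rewrite /ComplexField.Normc.normc /= expr0n addr0 sqrtr_sqr.
have := ler_norm t; lra.
Qed.
End SP.

Section Schur.
Variable R : realType.

Lemma amgm_w (x y u v : R) : 0 < u -> 0 < v ->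
  x * y <= (v / u * x ^+ 2 + u / v * y ^+ 2) / 2.
Proof.
move=> u0 v0.
have h : 0 <= (v * x - u * y) ^+ 2 by apply: sqr_ge0.
have uv : 0 < u * v by apply: mulr_gt0.
have -> : (v / u * x ^+ 2 + u / v * y ^+ 2) / 2 =
   ((v * x - u * y) ^+ 2 + 2 * (u * v) * (x * y)) / (2 * (u * v)).
  by field; rewrite !gt_eqF.
rewrite ler_pdivlMr ?mulr_gt0 //.
lra.
Qed.

Lemma schur n (C Ps : 'I_n -> 'I_n -> R) (D v d : 'I_n -> R) (c : R) :
  (forall i j, C i j = C j i) -> (forall i j, `|C i j| <= D i * Ps i j) ->
  (forall i, 0 <= D i) -> (forall i, 0 < v i) ->
  (forall i, \sum_j Ps i j * v j <= c * v i) ->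
  \sum_i \sum_j d i * d j * C i j <= c * \sum_i D i * d i ^+ 2.
Proof.
move=> Csym CD D0 v0 Pv.
pose T i j := `|C i j| * (v j / v i * d i ^+ 2).
have step1 : \sum_i \sum_j d i * d j * C i j <=
    \sum_i \sum_j (T i j + T j i) / 2.
  apply: ler_sum => i _; apply: ler_sum => j _.
  have h1 : d i * d j * C i j <= `|C i j| * (`|d i| * `|d j|).
    rewrite mulrC; apply: le_trans (ler_norm _) _.
    by rewrite normrM normrM.
  apply: le_trans h1 _.
  have h2 := amgm_w `|d i| `|d j| (v0 i) (v0 j).
  rewrite !real_normK ?num_real // in h2.
  rewrite /T (Csym j i) -mulrDr -mulrA ler_wpM2l //.
have step2 : \sum_i \sum_j (T i j + T j i) / 2 = \sum_i \sum_j T i j.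
  under eq_bigr do rewrite -mulr_suml big_split /=.
  rewrite -mulr_suml big_split /= [X in (_ + X) / 2]exchange_big /=.
  by field.
have step3 : \sum_i \sum_j T i j <= \sum_i D i * d i ^+ 2 / v i * \sum_j Ps i j * v j.
  apply: ler_sum => i _; rewrite mulr_sumr; apply: ler_sum => j _.
  rewrite /T.
  have e : D i * d i ^+ 2 / v i * (Ps i j * v j) = (D i * Ps i j) * (v j / v i * d i ^+ 2).
    by field; rewrite gt_eqF.
  rewrite e; apply: ler_wpM2r; last exact: CD.
  by rewrite mulr_ge0 ?sqr_ge0 // divr_ge0 // ltW.
apply: le_trans step1 _; rewrite step2; apply: le_trans step3 _.
rewrite mulr_sumr; apply: ler_sum => i _.
have e : c * (D i * d i ^+ 2) = D i * d i ^+ 2 / v i * (c * v i).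
  by field; rewrite gt_eqF.
rewrite e; apply: ler_wpM2l; last exact: Pv.
by apply: divr_ge0; [apply: mulr_ge0 => //; exact: sqr_ge0 | exact: ltW].
Qed.
End Schur.

Section BigMax.
Variable R : realType.
Lemma bigmax_ge0 (T : finType) (F : T -> R) (P : pred T) :
  0 <= \big[Num.max/0]_(y | P y) F y.
Proof.
by elim/big_rec: _ => // y m _ h; rewrite le_max h orbT.
Qed.
Lemma bigmax_ge_seq (T : eqType) (F : T -> R) (P : pred T) x r :
  x \in r -> P x -> F x <= \big[Num.max/0]_(y <- r | P y) F y.
Proof.
move=> + Px; elim: r => // a r IH.
rewrite in_cons big_cons => /orP [/eqP <-|xr].
  by rewrite Px le_max lexx.
case: (P a); last exact: IH.
by rewrite le_max IH ?orbT.
Qed.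
Lemma bigmax_ge (T : finType) (F : T -> R) (P : pred T) x :
  P x -> F x <= \big[Num.max/0]_(y | P y) F y.
Proof. by move=> Px; apply: bigmax_ge_seq => //; rewrite mem_index_enum. Qed.
End BigMax.

Section Cube.
Variables (R : realType) (n : nat) (nu : cube n -> R).
Hypothesis dnu : is_distribution nu.

Definition Ex (f : cube n -> R) := \sum_s nu s * f s.
Definition bi i (s : cube n) : R := (s i)%:R.
Definition pp i := Ex (bi i).
Definition CC i j := Ex (fun s => bi i s * bi j s) - pp i * pp j.
Definition DD i := pp i * (1 - pp i).

Lemma Ex_sum (F : 'I_n -> cube n -> R) : Ex (fun s => \sum_i F i s) = \sum_i Ex (F i).
Proof. by rewrite /Ex; under eq_bigr do rewrite mulr_sumr; exact: exchange_big. Qed.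

Lemma Ex_scal k f : Ex (fun s => k * f s) = k * Ex f.
Proof. by rewrite /Ex mulr_sumr; apply: eq_bigr => s _; ring. Qed.

Lemma Ex_add f g : Ex (fun s => f s + g s) = Ex f + Ex g.
Proof. by rewrite /Ex -big_split; apply: eq_bigr => s _; rewrite mulrDr. Qed.

Lemma Ex_cst k : Ex (fun=> k) = k.
Proof. by rewrite /Ex -mulr_suml dnu.2 mul1r. Qed.

Lemma Ex_ext f g : (forall s, f s = g s) -> Ex f = Ex g.
Proof. by move=> h; apply: eq_bigr => s _; rewrite h. Qed.

Lemma var_shift (K : R) (Y : cube n -> R) :
  Ex (fun s => (K + Y s) ^+ 2) - (Ex (fun s => K + Y s)) ^+ 2 =
  Ex (fun s => Y s ^+ 2) - (Ex Y) ^+ 2.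
Proof.
rewrite (Ex_ext (g := fun s => K ^+ 2 + (2 * K * Y s + Y s ^+ 2))); last by move=> s; ring.
rewrite !Ex_add Ex_cst Ex_scal Ex_cst; ring.
Qed.

Lemma var_decomp (e : 'I_n -> bool -> R) :
  Ex (fun s => (\sum_i e i (s i)) ^+ 2) - (Ex (fun s => \sum_i e i (s i))) ^+ 2 =
  \sum_i \sum_j (e i true - e i false) * (e j true - e j false) * CC i j.
Proof.
pose d i := e i true - e i false.
pose K := \sum_i e i false.
pose Y s := \sum_i d i * bi i s.
have ee (s : cube n) : \sum_i e i (s i) = K + Y s.
  rewrite /K /Y -big_split; apply: eq_bigr => i _.
  by rewrite /d /bi; case: (s i) => /=; [rewrite mulr1 addrC subrK | rewrite mulr0 addr0].
rewrite (Ex_ext (g := fun s => (K + Y s) ^+ 2)); last by move=> s; rewrite ee.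
rewrite (Ex_ext (f := fun s => \sum_i e i (s i)) (g := fun s => K + Y s)); last by move=> s; rewrite ee.
rewrite var_shift.
have EY2 : Ex (fun s => Y s ^+ 2) = \sum_i \sum_j d i * d j * Ex (fun s => bi i s * bi j s).
  rewrite (Ex_ext (g := fun s => \sum_i \sum_j (d i * d j) * (bi i s * bi j s))); last first.
    move=> s; rewrite /Y expr2 mulr_suml; apply: eq_bigr => i _.
    rewrite mulr_sumr; apply: eq_bigr => j _; ring.
  rewrite Ex_sum; apply: eq_bigr => i _.
  rewrite Ex_sum; apply: eq_bigr => j _.
  by rewrite Ex_scal.
have EY : Ex Y = \sum_i d i * pp i.
  by rewrite /Y Ex_sum; apply: eq_bigr => i _; rewrite Ex_scal.
rewrite EY2 EY expr2 mulr_suml -sumrB; apply: eq_bigr => i _.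
rewrite mulr_sumr -sumrB; apply: eq_bigr => j _.
rewrite /CC /d; ring.
Qed.

Lemma esq_bound (e : 'I_n -> bool -> R) :
  \sum_i DD i * (e i true - e i false) ^+ 2 <= Ex (fun s => \sum_i e i (s i) ^+ 2).
Proof.
rewrite Ex_sum; apply: ler_sum => i _.
rewrite (Ex_ext (g := fun s => e i false ^+ 2 +
   (2 * e i false * (e i true - e i false) + (e i true - e i false) ^+ 2) * bi i s)); last first.
  by move=> s; rewrite /bi; case: (s i); rewrite ?mulr1 ?mulr0 ?addr0 //; ring.
rewrite Ex_add Ex_cst Ex_scal -/(pp i) /DD.
have : 0 <= (e i false + pp i * (e i true - e i false)) ^+ 2 by apply: sqr_ge0.
set p := pp i; set a := e i false; set b := e i true.
move=> h.
rewrite -subr_ge0.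
have -> : a ^+ 2 + (2 * a * (b - a) + (b - a) ^+ 2) * p - p * (1 - p) * (b - a) ^+ 2
   = (a + p * (b - a)) ^+ 2 by ring.
exact: h.
Qed.

Lemma prob_Ex (P : pred (cube n)) : prob nu P = Ex (fun s => (P s)%:R).
Proof.
rewrite /prob /Ex big_mkcond; apply: eq_bigr => s _.
by case: (P s); rewrite ?mulr1 ?mulr0.
Qed.

Lemma prob_ext (P Q : pred (cube n)) : P =1 Q -> prob nu P = prob nu Q.
Proof. by move=> h; apply: eq_bigl. Qed.

Lemma prob_ge0 (P : pred (cube n)) : 0 <= prob nu P.
Proof. by apply: sumr_ge0 => s _; exact: dnu.1. Qed.

Lemma prob_split (P Q : pred (cube n)) :
  prob nu P = prob nu (fun s => P s && Q s) + prob nu (fun s => P s && ~~ Q s).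
Proof.
rewrite !prob_Ex -Ex_add; apply: Ex_ext => s.
by case: (P s); case: (Q s); rewrite /= ?add0r ?addr0.
Qed.

Lemma prob_T : prob nu (fun=> true) = 1.
Proof. by rewrite /prob dnu.2. Qed.

Lemma agree0 (t s : cube n) : agree finset.set0 t s.
Proof. by apply/forallP => k; rewrite finset.in_set0. Qed.

Lemma dTV_bool (f g : bool -> R) : f false = 1 - f true -> g false = 1 - g true ->
  dTV f g = `|f true - g true|.
Proof.
move=> hf hg; rewrite /dTV big_bool /= hf hg.
have -> : 1 - f true - (1 - g true) = - (f true - g true) by ring.
rewrite normrN; lra.
Qed.

Lemma cov_bound (t : cube n) i j : `|CC i j| <= DD i * influence nu finset.set0 t i j.
Proof.
have pE : pp i = prob nu (fun s => s i) by rewrite /pp prob_Ex.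
have aE : Ex (fun s => bi i s * bi j s) = prob nu (fun s => s i && s j).
  by rewrite prob_Ex; apply: Ex_ext => s; rewrite /bi; case: (s i); case: (s j); rewrite /= ?mulr1 ?mulr0 ?mul0r.
have pjE : pp j = prob nu (fun s => s i && s j) + prob nu (fun s => ~~ s i && s j).
  rewrite /pp (_ : Ex (bi j) = prob nu (fun s => s j)); last by rewrite prob_Ex.
  rewrite (prob_split (fun s => s j) (fun s => s i)).
  by congr (_ + _); apply: prob_ext => s /=; rewrite andbC.
have npE : prob nu (fun s => ~~ s i) = 1 - prob nu (fun s => s i).
  have := prob_split (fun=> true) (fun s => s i); rewrite prob_T /= => ->.
  by rewrite addrC addKr.
have ap : prob nu (fun s => s i && s j) <= prob nu (fun s => s i).
  by rewrite [leRHS](prob_split _ (fun s => s j)) lerDl prob_ge0.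
have qp : prob nu (fun s => ~~ s i && s j) <= 1 - prob nu (fun s => s i).
  by rewrite -npE [leRHS](prob_split (fun s => ~~ s i) (fun s => s j)) lerDl prob_ge0.
have a0 := prob_ge0 (fun s => s i && s j).
have q0 := prob_ge0 (fun s => ~~ s i && s j).
have p0 := prob_ge0 (fun s => s i).
set p := prob nu (fun s => s i) in pE npE ap qp p0 *.
set a := prob nu (fun s => s i && s j) in aE pjE ap a0 *.
set q := prob nu (fun s => ~~ s i && s j) in pjE qp q0 *.
have CCE : CC i j = a - p * (a + q) by rewrite /CC aE pE pjE.
have Inf0 : 0 <= influence nu finset.set0 t i j by rewrite /influence mxE bigmax_ge0.
rewrite CCE /DD pE.
have [p0e|pn0] := eqVneq p 0.
  have a0e : a = 0 by lra.
  by rewrite p0e a0e !mul0r subrr normr0.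
have [p1|pn1] := eqVneq p 1.
  have q0e : q = 0 by lra.
  by rewrite p1 q0e subrr mulr0 mul0r mul1r addr0 subrr normr0.
have pp0 : 0 < p by rewrite lt_neqAle eq_sym pn0 p0.
have pp1 : 0 < 1 - p.
  have p1' : p <= 1 by lra.
  by rewrite subr_gt0 lt_neqAle pn1 p1'.
have pinT : prob nu (pin finset.set0 t i true) = p.
  by apply: prob_ext => s; rewrite /pin agree0 eqb_id.
have pinF : prob nu (pin finset.set0 t i false) = 1 - p.
  by rewrite -npE; apply: prob_ext => s; rewrite /pin agree0 eqbF_neg.
have cmT b : cond_marginal nu (pin finset.set0 t i true) j b =
     prob nu (fun s => s i && (s j == b)) / p.
  by rewrite /cond_marginal pinT; congr (_ / _); apply: prob_ext => s; rewrite /pin agree0 eqb_id.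
have cmF b : cond_marginal nu (pin finset.set0 t i false) j b =
     prob nu (fun s => ~~ s i && (s j == b)) / (1 - p).
  by rewrite /cond_marginal pinF; congr (_ / _); apply: prob_ext => s; rewrite /pin agree0 eqbF_neg.
have dT : dTV (cond_marginal nu (pin finset.set0 t i true) j) (cond_marginal nu (pin finset.set0 t i false) j)
    = `|a / p - q / (1 - p)|.
  rewrite dTV_bool.
  - rewrite cmT cmF; congr (`| _ / _ - _ / _ |); apply: prob_ext => s; by rewrite eqb_id.
  - rewrite !cmT.
    have := prob_split (fun s => s i) (fun s => s j).
    rewrite -/p -/a => E.
    have -> : prob nu (fun s => s i && (s j == false)) = p - a.
      rewrite E addrC addKr; apply: prob_ext => s; by rewrite eqbF_neg.
    have -> : prob nu (fun s => s i && (s j == true)) = a.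
      by apply: prob_ext => s; rewrite eqb_id.
    by field; rewrite gt_eqF.
  - rewrite !cmF.
    have := prob_split (fun s => ~~ s i) (fun s => s j).
    rewrite npE -/q => E.
    have -> : prob nu (fun s => ~~ s i && (s j == false)) = (1 - p) - q.
      rewrite E addrC addKr; apply: prob_ext => s; by rewrite eqbF_neg.
    have -> : prob nu (fun s => ~~ s i && (s j == true)) = q.
      by apply: prob_ext => s; rewrite eqb_id.
    by field; rewrite gt_eqF.
have Infge : `|a / p - q / (1 - p)| <= influence nu finset.set0 t i j.
  rewrite /influence mxE -dT.
  apply: le_trans (bigmax_ge _ (x := true) _); last by rewrite pinT.
  apply: (bigmax_ge (fun y => dTV _ (cond_marginal nu (pin finset.set0 t i y) j)) (x := false)).
  by rewrite pinF.
have -> : a - p * (a + q) = p * (1 - p) * (a / p - q / (1 - p)).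
  by field; rewrite !gt_eqF.
rewrite normrM ger0_norm; last by apply: mulr_ge0; exact: ltW.
by apply: ler_wpM2l => //; apply: mulr_ge0; exact: ltW.
Qed.

Lemma pp01 i : 0 <= pp i <= 1.
Proof.
rewrite /pp -prob_Ex prob_ge0 /=.
have := prob_split (fun=> true) (fun s => s i); rewrite prob_T /= => ->.
by rewrite lerDl prob_ge0.
Qed.

Lemma core_var (t : cube n) (al : R) : 0 < al ->
  (exists v : 'I_n -> R, (forall i, 0 < v i) /\
     (forall i, \sum_j influence nu finset.set0 t i j * v j <= al^-1 * v i)) ->
  forall e : 'I_n -> bool -> R,
  al * (Ex (fun s => (\sum_i e i (s i)) ^+ 2) - (Ex (fun s => \sum_i e i (s i))) ^+ 2)
    <= Ex (fun s => \sum_i e i (s i) ^+ 2).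
Proof.
move=> al0 [v [vp Hv]] e.
rewrite var_decomp.
apply: le_trans (esq_bound e).
have := @schur R n CC (influence nu finset.set0 t) DD v (fun i => e i true - e i false) al^-1.
move=> /(_ _ _ _ vp Hv) H.
have H' : \sum_i \sum_j (e i true - e i false) * (e j true - e j false) * CC i j
   <= al^-1 * \sum_i DD i * (e i true - e i false) ^+ 2.
  apply: H.
  - by move=> i j; rewrite /CC [pp j * pp i]mulrC; congr (_ - _); apply: Ex_ext => s; exact: mulrC.
  - by move=> i j; exact: cov_bound.
  - by move=> i; rewrite /DD; have /andP[h1 h2] := pp01 i; apply: mulr_ge0; lra.
have ai : 0 < al^-1 by rewrite invr_gt0.
rewrite -(ler_pM2l ai) mulrA mulVf ?gt_eqF // mul1r.
exact: H'.
Qed.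

End Cube.


Section Final.
Variables (R : realType) (n : nat) (mu : cube n -> R) (al : R) (x : 'I_n -> R).
Hypotheses (dmu : is_distribution mu) (al0 : 0 < al) (xpos : forall i, 0 < x i).

Definition mg i := marginal mu i true.

Lemma mgE i : mg i = pp mu i.
Proof. by rewrite /mg /marginal prob_Ex //; apply: Ex_ext => s; rewrite /bi eqb_id. Qed.

Lemma mgF i : marginal mu i false = 1 - mg i.
Proof.
have := prob_split mu (fun=> true) (fun s => s i); rewrite (prob_T dmu) /= => ->.
have e1 : prob mu (fun s => s i == true) = prob mu (fun s => s i) by apply: prob_ext => s; rewrite eqb_id.
have e2 : prob mu (fun s => s i == false) = prob mu (fun s => ~~ s i) by apply: prob_ext => s; rewrite eqbF_neg.
rewrite /mg /marginal e1 e2; lra.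
Qed.

Lemma mg01 i : 0 <= mg i <= 1.
Proof. rewrite mgE; exact: pp01 dmu i. Qed.

Definition ai i := mg i * x i + (1 - mg i).

Lemma ai_gt0 i : 0 < ai i.
Proof.
have := mg01 i; have := xpos i; rewrite /ai => h /andP[h1 h2].
have [->|m1] := eqVneq (mg i) 1; first by rewrite mul1r subrr addr0.
have : mg i < 1 by rewrite lt_neqAle m1.
have : 0 <= mg i * x i by apply: mulr_ge0 => //; exact: ltW.
lra.
Qed.

Definition Af i (b : bool) := if b then x i / ai i - 1 else (ai i)^-1 - 1.
Definition aS (s : cube n) i := Af i (s i).

Lemma Af_pos i b : 0 < 1 + Af i b.
Proof.
rewrite /Af; case: b; rewrite addrC subrK.
  by apply: divr_gt0; [exact: xpos | exact: ai_gt0].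
by rewrite invr_gt0 ai_gt0.
Qed.

Lemma wpos' s i (t : R) : 0 <= t <= 1 -> 0 < cw aS s i t.
Proof.
move=> /andP[t0 t1]; rewrite /cw /aS.
have := Af_pos i (s i); set z := Af i (s i) => hz.
have [->|tn1] := eqVneq t 1; first by rewrite mul1r.
have : t < 1 by rewrite lt_neqAle tn1.
nra.
Qed.

Lemma N0 : \sum_s mu s * \sum_i aS s i <= 0.
Proof.
rewrite le_eqVlt; apply/orP; left; apply/eqP.
rewrite -/(Ex mu (fun s => \sum_i aS s i)) Ex_sum; apply: big1 => i _.
rewrite (@Ex_ext _ _ mu _ (fun s => ((ai i)^-1 - 1) + ((x i - 1) / ai i) * @bi R n i s)); last first.
  move=> s; rewrite /aS /Af /bi; case: (s i) => /=; rewrite ?mulr1 ?mulr0 ?addr0 //.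
  by field; rewrite gt_eqF // ai_gt0.
rewrite Ex_add (Ex_cst dmu) Ex_scal -/(pp mu i) -mgE.
have := ai_gt0 i; rewrite /ai => h.
by field; rewrite gt_eqF.
Qed.


Definition lam (t : R) i := expR (al * (ln (1 + t * Af i true) - ln (1 + t * Af i false))).
Definition Kc (t : R) := expR (al * \sum_i ln (1 + t * Af i false)).

Lemma Kc_gt0 t : 0 < Kc t.
Proof. exact: expR_gt0. Qed.

Lemma cE_split s (t : R) : cE aS al s t = Kc t * \prod_(i < n | s i) lam t i.
Proof.
rewrite /cE /cL /cw /aS /Kc /lam -expR_sum -expRD; congr expR.
rewrite [X in _ = _ + X]big_mkcond /= !mulr_sumr -big_split /=; apply: eq_bigr => i _.
by rewrite /Af; case: (s i) => /=; ring.
Qed.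

Lemma mu_pos : 0 < \sum_s mu s.
Proof. by rewrite dmu.2. Qed.

Lemma Phi_gt0 (t : R) : 0 < cPhi mu aS al t.
Proof. exact: (cPhi_gt0 aS al dmu.1 mu_pos). Qed.

Lemma gen_lam t : gen_poly mu (lam t) = cPhi mu aS al t / Kc t.
Proof.
rewrite /gen_poly /cPhi mulr_suml; apply: eq_bigr => s _.
rewrite cE_split; field; rewrite gt_eqF //; exact: Kc_gt0.
Qed.

Lemma tilt_eq t s : tilt (lam t) mu s = mu s * cE aS al s t / cPhi mu aS al t.
Proof.
rewrite /tilt gen_lam cE_split.
have := Kc_gt0 t; have := Phi_gt0 t => h1 h2.
by field; rewrite !gt_eqF.
Qed.

Lemma tilt_dist t : is_distribution (tilt (lam t) mu).
Proof.
split.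
  move=> s; rewrite tilt_eq; apply: divr_ge0; last exact: ltW (Phi_gt0 t).
  by apply: mulr_ge0; [exact: dmu.1 | exact: ltW (expR_gt0 _)].
under eq_bigr do rewrite tilt_eq.
rewrite -mulr_suml -/(cPhi mu aS al t).
by rewrite divff // gt_eqF // Phi_gt0.
Qed.

Lemma Ex_tilt t (f : cube n -> R) :
  Ex (tilt (lam t) mu) f = (\sum_s mu s * (cE aS al s t * f s)) / cPhi mu aS al t.
Proof.
rewrite /Ex mulr_suml; apply: eq_bigr => s _; rewrite tilt_eq.
have := Phi_gt0 t => h.
by field; rewrite gt_eqF.
Qed.

Lemma lam_bound (eps t : R) i : 0 <= t <= 1 -> 0 < eps ->
  x i <= (1 + eps) `^ al^-1 -> lam t i <= 1 + eps.
Proof.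
move=> t01 e0 xb.
have hT := wpos' [ffun=> true] i t01.
have hF := wpos' [ffun=> false] i t01.
rewrite /cw /aS !ffunE in hT hF.
have ai0 := ai_gt0 i.
have x0 := xpos i.
have e1 : 0 < 1 + eps by lra.
have lnb : al * ln (x i) <= ln (1 + eps).
  have lx : ln (x i) <= ln ((1 + eps) `^ al^-1).
    by rewrite ler_ln // ?posrE // powR_gt0.
  rewrite ln_powR in lx.
  have := ler_wpM2l (ltW al0) lx.
  by rewrite mulrA mulfV ?gt_eqF // mul1r.
have lne : 0 <= ln (1 + eps) by apply: ln_ge0; lra.
rewrite /lam -[X in _ <= X]lnK ?posrE // ler_expR.
have [x1|x1] := leP 1 (x i).
  have : 1 + t * Af i true <= x i * (1 + t * Af i false).
    rewrite /Af; have hh : 0 <= (1 - t) * (x i - 1) by apply: mulr_ge0; lra.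

    nra.
  move=> H; have h : ln (1 + t * Af i true) <= ln (x i) + ln (1 + t * Af i false).
    by rewrite -lnM ?posrE // ler_ln ?posrE ?mulr_gt0.
  have : ln (1 + t * Af i true) - ln (1 + t * Af i false) <= ln (x i) by lra.
  move=> /(ler_wpM2l (ltW al0)); lra.
have : 1 + t * Af i true <= 1 + t * Af i false.
  rewrite /Af lerD2l; apply: ler_wpM2l; first lra.
  rewrite lerD2r ler_pdivrMr // mulVf ?gt_eqF //; exact: ltW.
move=> H; have h : ln (1 + t * Af i true) <= ln (1 + t * Af i false) by rewrite ler_ln ?posrE.
have : ln (1 + t * Af i true) - ln (1 + t * Af i false) <= 0 by lra.
move=> /(ler_wpM2l (ltW al0)); rewrite mulr0; lra.
Qed.

Lemma var_hyp (eta eps : R) : completely_spectrally_independent mu eta eps ->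
  eta < al^-1 -> 0 < eps -> (forall i, x i <= (1 + eps) `^ al^-1) ->
  forall t : R, 0 <= t <= 1 ->
  al * ((\sum_s mu s * (cE aS al s t * cX aS s t ^+ 2)) * cPhi mu aS al t
     - cN mu aS al t ^+ 2) <= (\sum_s mu s * (cE aS al s t * cY aS s t)) * cPhi mu aS al t.
Proof.
move=> csi etac e0 xb t t01.
have dnu := tilt_dist t.
pose t0 : cube n := [ffun=> false].
have lamb i : 0 < lam t i <= 1 + eps by rewrite expR_gt0 lam_bound.
have si := csi (lam t) lamb.
have sr : spectral_radius (influence (tilt (lam t) mu) finset.set0 t0) <= eta.
  apply: si.
  rewrite (@prob_ext _ _ _ _ (fun=> true)); first by rewrite (prob_T dnu).
  by move=> s; rewrite agree0.
have ai0 : 0 < al^-1 by rewrite invr_gt0.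
have A0 : forall i j, 0 <= influence (tilt (lam t) mu) finset.set0 t0 i j.
  by move=> i j; rewrite mxE; exact: bigmax_ge0.
have [v [vp Hv]] := PF_lite A0 ai0 (det_ne0 sr etac).
pose e i b := Af i b / (1 + t * Af i b).
have H := core_var dnu (t:=t0) al0 (ex_intro _ v (conj vp Hv)) e.
rewrite !Ex_tilt in H.
set A := \sum_s mu s * (cE aS al s t * cX aS s t ^+ 2).
set B := cN mu aS al t.
set C := \sum_s mu s * (cE aS al s t * cY aS s t).
set P := cPhi mu aS al t.
have HH : al * (A / P - (B / P) ^+ 2) <= C / P := H.
have Pp : 0 < P := Phi_gt0 t.
have eq1 : al * (A * P - B ^+ 2) = (al * (A / P - (B / P) ^+ 2)) * P ^+ 2.
  by field; rewrite gt_eqF.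
have eq2 : C * P = (C / P) * P ^+ 2 by field; rewrite gt_eqF.
by rewrite eq1 eq2 ler_pM2r // exprn_gt0.
Qed.

Lemma Phi0 : cPhi mu aS al 0 = 1.
Proof.
have E0 s : cE aS al s 0 = 1.
  rewrite /cE /cL /cw big1 ?mulr0 ?expR0 // => i _; by rewrite mul0r addr0 ln1.
rewrite /cPhi; under eq_bigr do rewrite E0 mulr1.
exact: dmu.2.
Qed.

Lemma lam1 i : lam 1 i = x i `^ al.
Proof.
have ai0 := ai_gt0 i; have x0 := xpos i.
rewrite /lam /Af !mul1r [1 + (x i / ai i - 1)]addrC subrK [1 + ((ai i)^-1 - 1)]addrC subrK.
rewrite lnM ?posrE ?invr_gt0 // addrK /powR gt_eqF //.
Qed.

Lemma Kc1 : Kc 1 = expR (- (al * \sum_i ln (ai i))).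
Proof.
rewrite /Kc /Af; congr expR; rewrite -mulrN -sumrN; congr (_ * _).
apply: eq_bigr => i _; rewrite mul1r [1 + _]addrC subrK lnV // posrE; exact: ai_gt0.
Qed.

Lemma final_bound (eta eps : R) : completely_spectrally_independent mu eta eps ->
  eta < al^-1 -> 0 < eps -> (forall i, x i <= (1 + eps) `^ al^-1) ->
  F_fun mu al x <= 1.
Proof.
move=> csi etac e0 xb.
have cm := calc_main dmu.1 mu_pos al0 wpos' N0 (var_hyp csi etac e0 xb).
rewrite Phi0 in cm.
set S := \sum_i ln (ai i).
set G := gen_poly mu (fun i => x i `^ al).
have GE : G = gen_poly mu (lam 1).
  by apply: eq_bigr => s _; congr (_ * _); apply: eq_bigr => i _; rewrite lam1.
have G_le : G <= expR (al * S).
  rewrite GE gen_lam Kc1 ler_pdivrMr ?expR_gt0 // -expRD addrN expR0; exact: cm.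
have G0 : 0 <= G.
  apply: sumr_ge0 => s _; apply: mulr_ge0; first exact: dmu.1.
  by apply: prodr_ge0 => i _; exact: powR_ge0.
have den : \prod_(i < n) (marginal mu i true * x i + marginal mu i false) = expR S.
  rewrite /S expR_sum; apply: eq_bigr => i _.
  rewrite lnK ?posrE ?ai_gt0 // /ai mgF /mg; ring.
rewrite /F_fun -/G den ler_pdivrMr ?expR_gt0 // mul1r.
have ain : 0 <= al^-1 by rewrite invr_ge0 ltW.
have := @ge0_ler_powR _ _ ain G (expR (al * S)).
rewrite !nnegrE => /(_ G0 (ltW (expR_gt0 _)) G_le) h.
apply: le_trans h _.
rewrite /powR gt_eqF ?expR_gt0 // expRK mulrA mulVf ?gt_eqF // mul1r.
by [].
Qed.

End Final.

Unset Implicit Arguments.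
Local Close Scope classical_set_scope.

Theorem lemma5p2 (R : realType) (n : nat) (eta eps : R) (mu : cube n -> R) :
  1 < eta -> 0 < eps -> is_distribution mu ->
  completely_spectrally_independent mu eta eps ->
  forall alpha : R, 0 < alpha -> alpha <= (2 * eta)^-1 ->
  forall x : 'I_n -> R, (forall i, 0 < x i <= (1 + eps) `^ (alpha^-1)) ->
  F_fun mu alpha x <= 1.
Proof.
move=> eta1 eps0 dmu csi alpha al0 alle x xb.
have xpos i : 0 < x i by have /andP[] := xb i.
have xle i : x i <= (1 + eps) `^ alpha^-1 by have /andP[] := xb i.
have etac : eta < alpha^-1.
  have h : 2 * eta <= alpha^-1.
    rewrite -[2 * eta]invrK lef_pV2 ?posrE ?invr_gt0 //; lra.
  lra.
exact: (final_bound dmu al0 xpos csi etac eps0 xle).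
Qed.
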